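(* For $0<q<1$ and $w\in\mathbb{C}$, \[ \sum_{k=-\infty}^{\infty}q^{-k/2}\,\mathfrak{j}_k(2w;q)^2=\mathfrak{j}_0(2w;q)^2+\sum_{k=1}^\infty\big(q^{k/2}+q^{-k/2}\big)\mathfrak{j}_k(2w;q)^2=(-q^{1/2}w^2;q)_\infty. \] Equivalently, \[ J_0^{(2)}(2w;q)^2+\sum_{k=1}^\infty\big(q^{k/2}+q^{-k/2}\big)q^{k^2/2}J_k^{(2)}(2w;q)^2=(-w^2;q)_\infty. \]
   Context: $(a;q)_k=\prod_{j=0}^{k-1}(1-aq^j)$, $(a;q)_\infty=\lim_k(a;q)_k$, ${}_0\phi_1(;b;q,z)=\sum_{k\ge0}\frac{q^{k(k-1)}}{(q;q)_k(b;q)_k}z^k$. Jackson's second $q$-Bessel function is $J_\nu^{(2)}(x;q)=\frac{(q^{\nu+1};q)_\infty}{(q;q)_\infty}\left(\frac{x}{2}\right)^{\nu}{}_0\phi_1\!\left(;q^{\nu+1};q,-\frac{q^{\nu+1}x^2}{4}\right)$, and \[ \mathfrak{j}_\nu(x;q)=q^{\nu^2/4}J^{(2)}_\nu(q^{1/4}x;q)=q^{\nu(\nu+1)/4}\frac{(q^{\nu+1};q)_\infty}{(q;q)_\infty}\left(\frac{x}{2}\right)^{\nu}{}_0\phi_1\!\left(;q^{\nu+1};q,-q^{\nu+3/2}\frac{x^2}{4}\right). \] For negative integer orders $\nu=-n$, $\mathfrak{j}_{-n}$ is defined as the limit $\nu\to-n$ (it equals $(-1)^n\mathfrak{j}_n$).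 *)

(* Defs.v *)
From Stdlib Require Import Reals.
From Coquelicot Require Export Coquelicot.
Open Scope C_scope.

Fixpoint qpoch (a : C) (q : R) (k : nat) : C :=
  match k with
  | O => 1
  | S k' => qpoch a q k' * (1 - a * RtoC (q ^ k'))
  end.

Definition qpoch_inf (a : C) (q : R) : C :=
  @lim C_CompleteNormedModule (filtermap (fun n => qpoch a q n) eventually).

Definition CSeries (a : nat -> C) : C :=
  @lim C_CompleteNormedModule (filtermap (sum_n a) eventually).

Definition phi01 (b : C) (q : R) (z : C) : C :=
  CSeries (fun k => RtoC (q ^ (k * (k - 1))) / (qpoch (RtoC q) q k * qpoch b q k)
                     * pow_n z k).

Definition J2 (n : nat) (q : R) (x : C) : C :=
  qpoch_inf (RtoC (q ^ (n + 1))) q / qpoch_inf (RtoC q) q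
  * pow_n (x / 2) n
  * phi01 (RtoC (q ^ (n + 1))) q (- RtoC (q ^ (n + 1)) * pow_n x 2 / 4).

Definition jfrak (n : nat) (q : R) (x : C) : C :=
  RtoC (Rpower q (INR (n * (n + 1)) / 4))
  * (qpoch_inf (RtoC (q ^ (n + 1))) q / qpoch_inf (RtoC q) q)
  * pow_n (x / 2) n
  * phi01 (RtoC (q ^ (n + 1))) q
          (- RtoC (Rpower q (INR n + 3 / 2)) * pow_n x 2 / 4).

(* Main.v *)
Require Import Defs.
From Stdlib Require Import Reals Lra Lia.
From Coquelicot Require Import Coquelicot.
Open Scope C_scope.

Lemma pow_n_Cpow (x : C) n : pow_n x n = x ^ n.
Proof. induction n; simpl; auto. Qed.

Lemma CLim (f : nat -> C) (l : C) :
  filterlim f eventually (locally l) <->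
  (forall eps : R, (0 < eps)%R -> exists N, forall n, (N <= n)%nat -> (Cmod (f n - l) < eps)%R).
Proof.
  rewrite filterlim_locally_ball_norm. split.
  - intros H eps Heps. destruct (H (mkposreal eps Heps)) as [N HN].
    exists N. intros n Hn. apply (HN n Hn).
  - intros H eps. destruct (H eps (cond_pos eps)) as [N HN].
    exists N. intros n Hn. apply (HN n Hn).
Qed.

Lemma lim_unique_C (f : nat -> C) (l : C) :
  filterlim f eventually (locally l) ->
  @lim C_CompleteNormedModule (filtermap f eventually) = l.
Proof.
  intros Hf.
  set (F := filtermap f eventually).
  assert (PF : ProperFilter F).
  { apply filtermap_proper_filter. apply eventually_filter. }
  assert (Hc : cauchy F).
  { intros eps. exists l. apply Hf. apply locally_ball. }
  pose proof (@complete_cauchy C_CompleteNormedModule F PF Hc) as HL.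
  assert (PF' : ProperFilter' F) by (apply Proper_StrongProper; exact PF).
  assert (H1 : is_filter_lim F (@lim C_CompleteNormedModule F)).
  { intros P [eps HP]. eapply filter_imp. 2: apply (HL eps). exact HP. }
  exact (@is_filter_lim_unique C_AbsRing C_NormedModule F PF' _ _ H1 Hf).
Qed.

Lemma CSeries_unique (a : nat -> C) (l : C) : is_series a l -> CSeries a = l.
Proof. intros H. unfold CSeries. apply lim_unique_C. exact H. Qed.

Lemma lim_bound (f : nat -> C) (l : C) (B : R) :
  filterlim f eventually (locally l) -> (forall n, (Cmod (f n) <= B)%R) -> (Cmod l <= B)%R.
Proof.
  intros Hf HB. destruct (Rle_or_lt (Cmod l) B) as [H|H]; auto.
  exfalso. destruct (proj1 (CLim f l) Hf (Cmod l - B)%R) as [N HN]; [lra|].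
  specialize (HN N (le_n N)). specialize (HB N).
  assert (Cmod l <= Cmod (f N) + Cmod (f N - l))%R.
  { replace l with (f N - (f N - l)) at 1 by ring.
    eapply Rle_trans. apply Cmod_triangle. rewrite Cmod_opp. lra. }
  lra.
Qed.

Lemma geom_bound (s : nat -> R) (N : nat) :
  (forall n, (0 <= s n)%R) -> (forall n, (N <= n)%nat -> (s (S n) <= s n / 2)%R) ->
  exists K, (0 <= K)%R /\ forall n, (s n <= K / 2 ^ n)%R.
Proof.
  intros Hpos Hdec.
  set (K := sum_f_R0 (fun i => s i * 2 ^ i)%R N).
  assert (H1 : forall M n, (n <= M)%nat -> (s n * 2 ^ n <= sum_f_R0 (fun i => s i * 2 ^ i)%R M)%R).
  { induction M; intros n Hn.
    - assert (n = 0%nat) by lia. subst. simpl. lra.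
    - simpl. destruct (Nat.eq_dec n (S M)).
      + subst. assert (0 <= sum_f_R0 (fun i => s i * 2 ^ i)%R M)%R.
        { apply cond_pos_sum. intros. apply Rmult_le_pos; auto. apply pow_le; lra. }
        simpl in *. lra.
      + assert (n <= M)%nat by lia. specialize (IHM n H).
        assert (0 <= s (S M) * (2 * 2 ^ M))%R.
        { apply Rmult_le_pos; auto. apply Rmult_le_pos; [lra| apply pow_le; lra]. }
        lra. }
  assert (H2 : forall d, (s (N + d)%nat * 2 ^ (N + d) <= s N * 2 ^ N)%R).
  { induction d.
    - rewrite Nat.add_0_r. lra.
    - replace (N + S d)%nat with (S (N + d)) by lia.
      assert (HH := Hdec (N + d)%nat ltac:(lia)).
      simpl. assert (0 < 2 ^ (N + d))%R by (apply pow_lt; lra).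
      nra. }
  exists K. split.
  - apply cond_pos_sum. intros. apply Rmult_le_pos; auto. apply pow_le; lra.
  - intros n. assert (0 < 2 ^ n)%R by (apply pow_lt; lra).
    apply (Rmult_le_reg_r (2 ^ n)); auto. unfold Rdiv. rewrite Rmult_assoc, Rinv_l; [|lra].
    rewrite Rmult_1_r.
    destruct (Compare_dec.le_lt_dec n N).
    + apply H1; auto.
    + replace n with (N + (n - N))%nat by lia. eapply Rle_trans. apply H2. apply H1; auto.
Qed.

Lemma psum_bound (a : nat -> C) (K : R) :
  (forall n, (Cmod (a n) <= K / 2 ^ n)%R) -> forall N, (Cmod (sum_n a N) <= 2 * K - K / 2 ^ N)%R.
Proof.
  intros H N. induction N.
  - rewrite sum_O. specialize (H 0%nat). simpl in *. lra.
  - rewrite sum_Sn. eapply Rle_trans. apply Cmod_triangle.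
    specialize (H (S N)). simpl in H |- *.
    assert (K / (2 * 2 ^ N) = K / 2 ^ N / 2)%R.
    { field. apply pow_nonzero. lra. }
    rewrite H0 in H |- *. lra.
Qed.

Lemma geom_series (a : nat -> C) (K : R) :
  (forall n, (Cmod (a n) <= K / 2 ^ n)%R) -> exists l, is_series a l /\ (Cmod l <= 2 * K)%R.
Proof.
  intros H.
  assert (HK : (0 <= K)%R).
  { specialize (H 0%nat). simpl in H. pose proof (Cmod_ge_0 (a 0%nat)). lra. }
  assert (Hex : ex_series a).
  { apply (ex_series_le a (fun n => K * (/ 2) ^ n)%R).
    - intros n. change (Cmod (a n) <= K * (/ 2) ^ n)%R. eapply Rle_trans. apply H.
      rewrite pow_inv. right. reflexivity.
    - apply (@ex_series_scal_l R_AbsRing R_NormedModule K (fun n => (/ 2) ^ n)%R).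
      apply ex_series_geom. rewrite Rabs_pos_eq; lra. }
  destruct Hex as [l Hl]. exists l. split; auto.
  apply (lim_bound (sum_n a)); auto.
  intros n. eapply Rle_trans. apply psum_bound; auto.
  assert (0 <= K / 2 ^ n)%R. { apply Rdiv_le_0_compat; auto. apply pow_lt; lra. } lra.
Qed.

Section P2sec.
Local Open Scope R_scope.


Fixpoint qf (q : R) (m : nat) : R :=
  match m with O => 1 | S m' => qf q m' * (1 - q ^ (S m')) end.

Fixpoint cc (q : R) (k : nat) : R :=
  match k with O => 1 | S k' => cc q k' * q ^ k' end.

Definition WW (q : R) (k : nat) : R :=
  match k with O => 1 | S _ => cc q k + cc q (S k) end.

Definition ac (q : R) (k m : nat) : R :=
  (-1) ^ m * q ^ (m * (m + k)) / (qf q m * qf q (m + k)).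

Lemma exp_mono x y : x <= y -> exp x <= exp y.
Proof. intros [H|H]. left; apply exp_increasing; auto. subst; lra. Qed.

Lemma pow_q_pos q n : 0 < q -> 0 < q ^ n.
Proof. intros; apply pow_lt; auto. Qed.

Lemma pow_q_le1 q n : 0 < q < 1 -> q ^ n <= 1.
Proof.
  intros Hq. induction n; simpl; [lra|].
  pose proof (pow_q_pos q n (proj1 Hq)). nra.
Qed.

Lemma pow_q_decr q m n : 0 < q < 1 -> (m <= n)%nat -> q ^ n <= q ^ m.
Proof.
  intros Hq Hmn. replace n with (m + (n - m))%nat by lia. rewrite pow_add.
  pose proof (pow_q_pos q m (proj1 Hq)). pose proof (pow_q_le1 q (n - m) Hq). nra.
Qed.

Lemma qf_pos q m : 0 < q < 1 -> 0 < qf q m.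
Proof.
  intros Hq. induction m; simpl; [lra|].
  pose proof (pow_q_le1 q m Hq). pose proof (pow_q_pos q m (proj1 Hq)).
  apply Rmult_lt_0_compat; auto. nra.
Qed.

Lemma qf_le1 q m : 0 < q < 1 -> qf q m <= 1.
Proof.
  intros Hq. induction m; simpl; [lra|].
  pose proof (pow_q_le1 q m Hq). pose proof (pow_q_pos q m (proj1 Hq)).
  pose proof (qf_pos q m Hq).
  assert (0 < q * q ^ m) by nra. assert (0 <= 1 - q * q ^ m <= 1) by nra. nra.
Qed.

Lemma one_minus_ge_exp q x : 0 < q < 1 -> 0 <= x <= q -> exp (- x / (1 - q)) <= 1 - x.
Proof.
  intros Hq Hx.
  assert (H1 : exp (x / (1 - x)) >= 1 / (1 - x)).
  { pose proof (exp_ineq1_le (x / (1 - x))).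
    assert (1 + x / (1 - x) = 1 / (1 - x)) by (field; intro; lra). lra. }
  assert (H2 : exp (- x / (1 - q)) <= exp (- (x / (1 - x)))).
  { apply exp_mono. unfold Rdiv. rewrite <- Ropp_mult_distr_l.
    apply Ropp_le_contravar. apply Rmult_le_compat_l; [lra|].
    apply Rinv_le_contravar; lra. }
  rewrite exp_Ropp in H2.
  assert (/ exp (x / (1 - x)) <= 1 - x).
  { assert (0 < exp (x / (1 - x))) by apply exp_pos.
    apply (Rmult_le_reg_l (exp (x / (1 - x)))); auto.
    rewrite Rinv_r by lra.
    assert (1 / (1 - x) * (1 - x) = 1) by (field; intro; lra).
    assert (0 < 1 - x) by lra. nra. }
  lra.
Qed.

Lemma qf_lower q m : 0 < q < 1 -> exp (- q * (1 - q ^ m) / (1 - q) ^ 2) <= qf q m.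
Proof.
  intros Hq. induction m.
  - simpl. replace (- q * (1 - 1) / ((1 - q) * ((1 - q) * 1))) with 0 by (field; intro; lra).
    rewrite exp_0. lra.
  - simpl qf.
    assert (Hm : exp (- q ^ S m / (1 - q)) <= 1 - q ^ S m).
    { apply one_minus_ge_exp; auto. split. left; apply pow_q_pos; lra.
      replace q with (q ^ 1) at 2 by ring. apply pow_q_decr; auto; lia. }
    replace (- q * (1 - q ^ S m) / (1 - q) ^ 2) with
      ((- q * (1 - q ^ m) / (1 - q) ^ 2) + (- q ^ S m / (1 - q))) by (simpl; field; intro; lra).
    rewrite exp_plus. apply Rmult_le_compat; auto; left; apply exp_pos.
Qed.

Lemma qf_lb q : 0 < q < 1 -> exists d, 0 < d /\ forall m, d <= qf q m.
Proof.
  intros Hq. exists (exp (- q / (1 - q) ^ 2)). split. apply exp_pos.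
  intros m. eapply Rle_trans. 2: apply qf_lower; auto.
  apply exp_mono. unfold Rdiv.
  assert (0 < / (1 - q) ^ 2). { apply Rinv_0_lt_compat. apply pow_lt. lra. }
  pose proof (pow_q_pos q m (proj1 Hq)).
  assert (0 <= q * q ^ m * / (1 - q) ^ 2) by (apply Rmult_le_pos; nra). nra.
Qed.

Lemma small_pow q r : 0 < q < 1 -> 0 <= r -> exists N, forall m, (N <= m)%nat -> q ^ m * r <= 1 / 2.
Proof.
  intros Hq Hr. destruct (pow_lt_1_zero q ltac:(rewrite Rabs_pos_eq; lra) (1 / (2 * (r + 1)))) as [N HN].
  { apply Rdiv_lt_0_compat; lra. }
  exists N. intros m Hm. specialize (HN m Hm). rewrite Rabs_pos_eq in HN by (left; apply pow_q_pos; lra).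
  assert (q ^ m * (2 * (r + 1)) < 1).
  { apply (Rmult_lt_compat_r (2 * (r + 1))) in HN; [|lra].
    replace (1 / (2 * (r + 1)) * (2 * (r + 1))) with 1 in HN by (field; intro; lra). lra. }
  pose proof (pow_q_pos q m (proj1 Hq)). nra.
Qed.

Lemma ac_dom q r : 0 < q < 1 -> 0 <= r ->
  exists K, 0 <= K /\ forall k m j, Rabs (ac q k (m + j)) * r ^ m <= K / 2 ^ m.
Proof.
  intros Hq Hr. destruct (qf_lb q Hq) as [d [Hd Hdm]].
  destruct (small_pow q r Hq Hr) as [N HN].
  destruct (geom_bound (fun m => q ^ (m * m) * r ^ m / (d * d)) N) as [K [HK0 HK]].
  - intros m. apply Rmult_le_pos. apply Rmult_le_pos. left; apply pow_q_pos; lra.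
    apply pow_le; auto. left. apply Rinv_0_lt_compat. nra.
  - intros m Hm. replace (S m * S m)%nat with (m * m + (m + (m + 1)))%nat by ring.
    rewrite pow_add. simpl pow at 2.
    assert (q ^ (m + (m + 1)) <= q ^ m) by (apply pow_q_decr; auto; lia).
    specialize (HN m Hm).
    assert (0 < q ^ (m * m)) by (apply pow_q_pos; lra).
    assert (0 <= r ^ m) by (apply pow_le; auto).
    assert (0 < / (d * d)) by (apply Rinv_0_lt_compat; nra).
    assert (0 <= q ^ (m + (m + 1))) by (left; apply pow_q_pos; lra).
    unfold Rdiv. 
    assert (q ^ (m + (m + 1)) * r <= 1/2) by nra.
    assert (0 <= q ^ (m * m) * r ^ m * / (d * d)).
    { apply Rmult_le_pos; [apply Rmult_le_pos|]; lra. }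
    apply Rle_trans with ((q ^ (m * m) * r ^ m * / (d * d)) * (q ^ (m + (m + 1)) * r)).
    right; simpl; ring.
    apply Rle_trans with ((q ^ (m * m) * r ^ m * / (d * d)) * (1 / 2)).
    apply Rmult_le_compat_l; lra. right; field. nra.
  - exists K. split; auto. intros k m j. eapply Rle_trans. 2: apply HK.
    unfold ac. rewrite Rabs_div. rewrite Rabs_mult, pow_1_abs, Rmult_1_l.
    2: { pose proof (qf_pos q (m + j) Hq). pose proof (qf_pos q (m + j + k) Hq). nra. }
    rewrite (Rabs_pos_eq (q ^ _)) by (left; apply pow_q_pos; lra).
    pose proof (qf_pos q (m + j) Hq) as H1. pose proof (qf_pos q (m + j + k) Hq) as H2.
    rewrite Rabs_pos_eq by nra.
    assert (Hp : q ^ ((m + j) * (m + j + k)) <= q ^ (m * m)) by (apply pow_q_decr; auto; nia).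
    assert (Hi : / (qf q (m + j) * qf q (m + j + k)) <= / (d * d)).
    { apply Rinv_le_contravar. nra. apply Rmult_le_compat; auto; lra. }
    assert (0 <= r ^ m) by (apply pow_le; auto).
    assert (0 < q ^ ((m + j) * (m + j + k))) by (apply pow_q_pos; lra).
    assert (0 < / (qf q (m + j) * qf q (m + j + k))) by (apply Rinv_0_lt_compat; nra).
    unfold Rdiv.
    apply Rle_trans with (q ^ (m * m) * / (d * d) * r ^ m); [|right; ring].
    apply Rmult_le_compat_r; auto.
    apply Rmult_le_compat; lra.
Qed.

Lemma cc_pos q k : 0 < q -> 0 < cc q k.
Proof. intros. induction k; simpl; [lra|]. apply Rmult_lt_0_compat; auto. apply pow_lt; auto. Qed.

Lemma cc_dom q r : 0 < q < 1 -> 0 <= r ->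
  exists K, 0 <= K /\ forall k, cc q k * r ^ k <= K / 2 ^ k.
Proof.
  intros Hq Hr. destruct (small_pow q r Hq Hr) as [N HN].
  apply (geom_bound (fun k => cc q k * r ^ k) N).
  - intros k. apply Rmult_le_pos. left; apply cc_pos; lra. apply pow_le; auto.
  - intros k Hk. simpl. specialize (HN k Hk). pose proof (cc_pos q k (proj1 Hq)).
    assert (0 <= r ^ k) by (apply pow_le; auto).
    replace (cc q k * q ^ k * (r * r ^ k)) with ((cc q k * r ^ k) * (q ^ k * r)) by ring.
    assert (0 <= cc q k * r ^ k) by nra.
    apply Rle_trans with ((cc q k * r ^ k) * (1 / 2)).
    apply Rmult_le_compat_l; lra. lra.
Qed.

End P2sec.

Definition aterm (q : R) (k : nat) (x : C) (m : nat) : C := RtoC (ac q k m) * x ^ m.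
Definition aS (q : R) (k : nat) (x : C) : C := CSeries (aterm q k x).

Lemma Cpow_mult_l (a b : C) n : (a * b) ^ n = a ^ n * b ^ n.
Proof. induction n; simpl. ring. rewrite IHn. ring. Qed.

Lemma Cmod_aterm_le q k x m r : (Cmod x <= r)%R ->
  (Cmod (aterm q k x m) <= Rabs (ac q k m) * r ^ m)%R.
Proof.
  intros Hx. unfold aterm. rewrite Cmod_mult, Cmod_R, Cmod_pow.
  apply Rmult_le_compat_l. apply Rabs_pos. apply pow_incr. split; auto. apply Cmod_ge_0.
Qed.

Lemma aterm_dom q r : (0 < q < 1)%R -> (0 <= r)%R ->
  exists K, (0 <= K)%R /\ forall k x m, (Cmod x <= r)%R -> (Cmod (aterm q k x m) <= K / 2 ^ m)%R.
Proof.
  intros Hq Hr. destruct (ac_dom q r Hq Hr) as [K [HK H]]. exists K. split; auto.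
  intros k x m Hx. eapply Rle_trans. apply Cmod_aterm_le; eauto.
  specialize (H k m 0%nat). rewrite Nat.add_0_r in H. exact H.
Qed.

Lemma a_series q k x : (0 < q < 1)%R -> is_series (aterm q k x) (aS q k x).
Proof.
  intros Hq. destruct (aterm_dom q (Cmod x) Hq (Cmod_ge_0 x)) as [K [HK H]].
  destruct (geom_series (aterm q k x) K) as [l [Hl _]].
  { intros m. apply H. lra. }
  unfold aS. rewrite (CSeries_unique _ l Hl). exact Hl.
Qed.

Lemma a_bound q r : (0 < q < 1)%R -> (0 <= r)%R ->
  exists M, (0 <= M)%R /\ forall k x, (Cmod x <= r)%R -> (Cmod (aS q k x) <= M)%R.
Proof.
  intros Hq Hr. destruct (aterm_dom q r Hq Hr) as [K [HK H]]. exists (2 * K)%R. split; [lra|].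
  intros k x Hx. destruct (geom_series (aterm q k x) K) as [l [Hl Hb]].
  { intros m. apply H. auto. }
  unfold aS. rewrite (CSeries_unique _ l Hl). exact Hb.
Qed.

Lemma series_eq (a : nat -> C) l1 l2 : is_series a l1 -> is_series a l2 -> l1 = l2.
Proof. intros H1 H2. rewrite <- (CSeries_unique _ _ H1). apply CSeries_unique; auto. Qed.

Lemma qf_S q m : qf q (S m) = (qf q m * (1 - q ^ S m))%R.
Proof. reflexivity. Qed.

Lemma ac_R1 q k m : (0 < q < 1)%R ->
  (ac q k (S m) * (1 - q ^ S m) = - q ^ (S k) * (ac q (S k) m * q ^ m))%R.
Proof.
  intros Hq. unfold ac.
  replace (S m + k)%nat with (S (m + k)) by lia.
  replace (m + S k)%nat with (S (m + k)) by lia.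
  replace (S m * S (m + k))%nat with (S k + m * S (m + k) + m)%nat by ring.
  rewrite !pow_add. rewrite qf_S.
  pose proof (qf_pos q m Hq). pose proof (qf_pos q (S (m + k)) Hq).
  assert (1 - q ^ S m <> 0)%R.
  { assert (q ^ S m < 1)%R. { simpl. pose proof (pow_q_le1 q m Hq). nra. } lra. }
  simpl pow at 1. field. repeat split; auto; lra.
Qed.

Lemma ac_R2 q j m : (0 < q < 1)%R ->
  (ac q (S j) m * (1 - q ^ (m + S j)) = ac q j m * q ^ m)%R.
Proof.
  intros Hq. unfold ac.
  replace (m + S j)%nat with (S (m + j)) by lia.
  replace (m * S (m + j))%nat with (m * (m + j) + m)%nat by ring.
  rewrite !pow_add. rewrite qf_S.
  pose proof (qf_pos q m Hq). pose proof (qf_pos q (m + j) Hq).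
  assert (1 - q ^ S (m + j) <> 0)%R.
  { assert (q ^ S (m + j) < 1)%R. { simpl. pose proof (pow_q_le1 q (m + j) Hq). nra. } lra. }
  field. repeat split; auto; lra.
Qed.

Lemma aS_R1 q k x : (0 < q < 1)%R ->
  aS q k x = aS q k (RtoC q * x) - RtoC (q ^ S k) * x * aS q (S k) (RtoC q * x).
Proof.
  intros Hq.
  set (f := fun m => aterm q k x m - aterm q k (RtoC q * x) m).
  set (L := aS q k x - aS q k (RtoC q * x)).
  assert (H : is_series f L).
  { exact (is_series_minus _ _ _ _ (a_series q k x Hq) (a_series q k (RtoC q * x) Hq)). }
  assert (Hf0 : f 0%nat = 0). { unfold f, aterm. simpl. ring. }
  assert (H' : is_series f (plus L (f 0%nat))).
  { rewrite Hf0. change (plus L (RtoC 0)) with (L + 0). rewrite Cplus_0_r. exact H. }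
  apply (@is_series_incr_1 C_AbsRing C_NormedModule f L) in H'.
  assert (H2 := is_series_scal (- RtoC (q ^ S k) * x) _ _ (a_series q (S k) (RtoC q * x) Hq)).
  assert (E : forall m, f (S m)
      = scal (- RtoC (q ^ S k) * x) (aterm q (S k) (RtoC q * x) m)).
  { intros m. unfold f, aterm. 
    change (scal ?a ?b) with (a * b).
    rewrite !Cpow_mult_l. rewrite <- !RtoC_pow.
    assert (Hr := ac_R1 q k m Hq).
    assert (E1 : RtoC (ac q k (S m)) * x ^ S m - (RtoC (ac q k (S m)) * (RtoC (q ^ S m) * x ^ S m))
      = RtoC (ac q k (S m) * (1 - q ^ S m))%R * x ^ S m).
    { rewrite RtoC_mult, RtoC_minus. ring. }
    rewrite E1, Hr. rewrite !RtoC_mult, RtoC_opp. simpl. ring. }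
  apply (is_series_ext _ _ _ E) in H'.
  pose proof (series_eq _ _ _ H' H2) as Heq.
  change (scal ?a ?b) with (a * b) in Heq.
  unfold L in Heq.
  replace (aS q k x) with ((aS q k x - aS q k (RtoC q * x)) + aS q k (RtoC q * x)) by ring.
  rewrite Heq. ring.
Qed.

Lemma aS_R2 q j x : (0 < q < 1)%R ->
  aS q (S j) x = RtoC (q ^ S j) * aS q (S j) (RtoC q * x) + aS q j (RtoC q * x).
Proof.
  intros Hq.
  pose proof (is_series_minus _ _ _ _ (a_series q (S j) x Hq)
     (is_series_scal (RtoC (q ^ S j)) _ _ (a_series q (S j) (RtoC q * x) Hq))) as H.
  assert (E : forall m, plus (aterm q (S j) x m) (opp (scal (RtoC (q ^ S j)) (aterm q (S j) (RtoC q * x) m)))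
     = aterm q j (RtoC q * x) m).
  { intros m. unfold aterm.
    change (plus ?a ?b) with (a + b). change (opp ?a) with (- a). change (scal ?a ?b) with (a * b).
    rewrite !Cpow_mult_l. rewrite <- !RtoC_pow.
    assert (Hr := ac_R2 q j m Hq).
    assert (E1 : RtoC (ac q (S j) m) * x ^ m + - (RtoC (q ^ S j) * (RtoC (ac q (S j) m) * (RtoC (q ^ m) * x ^ m)))
      = RtoC (ac q (S j) m * (1 - q ^ (m + S j)))%R * x ^ m).
    { rewrite RtoC_mult, RtoC_minus, pow_add, RtoC_mult. ring. }
    rewrite E1, Hr. rewrite RtoC_mult. rewrite <- Cmult_assoc. reflexivity. }
  apply (is_series_ext _ _ _ E) in H.
  pose proof (series_eq _ _ _ H (a_series q j (RtoC q * x) Hq)) as Heq.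
  change (plus ?a ?b) with (a + b) in Heq. change (opp ?a) with (- a) in Heq.
  change (scal ?a ?b) with (a * b) in Heq.
  rewrite <- Heq. ring.
Qed.

Lemma step_identity (Q u t g p b1 b2 : C) :
  let a1 := b1 - t * Q * Q * u * b2 in
  let b0 := a1 - t * Q * b1 in
  let W := g * t + g * t * (Q * t) in
  W * (u * p) * a1 ^ 2 =
  (1 + u) * W * (Q * u * t * p) * b1 ^ 2
  + u * (g * t * (Q * t) * (Q * Q * t) * ((Q * u) ^ 2 * t * p) * b2 ^ 2 - g * t * (Q * u * t * p) * b1 ^ 2)
  - 2 * (g * t * (Q * t)) * ((Q * u) ^ 2 * t * p) * b1 * b2
  - (u * (g * t * (Q * t) * (Q * u * t * p) * b1 ^ 2 - g * (t * p) * b0 ^ 2)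
     - 2 * (g * t) * (Q * u * t * p) * b0 * b1).
Proof. intros. unfold W, b0, a1. ring. Qed.

Lemma RtoC_ccS q k : RtoC (cc q (S k)) = RtoC (cc q k) * RtoC q ^ k.
Proof. simpl. rewrite RtoC_mult, RtoC_pow. reflexivity. Qed.

Lemma finite_identity q u (A B : nat -> C) :
  (forall k, A k = B k - RtoC (q ^ S k) * u * B (S k)) ->
  (forall j, A (S j) = RtoC (q ^ S j) * B (S j) + B j) ->
  forall N, sum_n (fun k => RtoC (WW q k) * u ^ k * A k ^ 2) N =
   (1 + u) * sum_n (fun k => RtoC (WW q k) * (RtoC q * u) ^ k * B k ^ 2) N
   + u * (RtoC (cc q (S (S N))) * (RtoC q * u) ^ S N * B (S N) ^ 2
          - RtoC (cc q N) * (RtoC q * u) ^ N * B N ^ 2)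
   - 2 * RtoC (cc q (S N)) * (RtoC q * u) ^ S N * B N * B (S N).
Proof.
  intros H1 H2 N. induction N.
  - rewrite !sum_O. match goal with |- ?a = ?b => change (@eq C a b) end. rewrite H1. simpl. rewrite !RtoC_mult. unfold WW. simpl.
    change (RtoC 1) with (RtoC 1). ring_simplify. 
    replace (RtoC (1 * q)) with (RtoC q) by (f_equal; ring).
    replace (RtoC (q * 1)) with (RtoC q) by (f_equal; ring).
    ring.
  - rewrite !sum_Sn. change (plus ?a ?b) with (a + b). rewrite IHN. clear IHN.
    assert (EB0 : B N = A (S N) - RtoC (q ^ S N) * B (S N)).
    { rewrite H2. ring. }
    rewrite EB0. rewrite (H1 (S N)).
    unfold WW. rewrite !RtoC_plus, !RtoC_ccS, !RtoC_pow, !Cpow_mult_l.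
    simpl Cpow.
    generalize (RtoC q ^ N) as t. generalize (u ^ N) as p. generalize (RtoC (cc q N)) as g.
    intros. match goal with |- ?a = ?b => change (@eq C a b) end. ring.
Qed.

Definition Fterm (q : R) (x : C) (k : nat) : C := RtoC (WW q k) * x ^ k * aS q k x ^ 2.
Definition FF (q : R) (x : C) : C := CSeries (Fterm q x).

Lemma cc_S_le q k : (0 < q < 1)%R -> (cc q (S k) <= cc q k)%R.
Proof.
  intros Hq. simpl. pose proof (cc_pos q k (proj1 Hq)). pose proof (pow_q_le1 q k Hq).
  pose proof (pow_q_pos q k (proj1 Hq)). nra.
Qed.

Lemma WW_le q k : (0 < q < 1)%R -> (0 <= WW q k <= 2 * cc q k)%R.
Proof.
  intros Hq. destruct k; simpl; [lra|].
  pose proof (cc_S_le q (S k) Hq). pose proof (cc_pos q (S (S k)) (proj1 Hq)).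
  simpl in *. lra.
Qed.

Lemma Cmod_sq (z : C) : Cmod (z ^ 2) = (Cmod z * Cmod z)%R.
Proof. rewrite Cmod_pow. simpl. ring. Qed.

Lemma Fterm_dom q r : (0 < q < 1)%R -> (0 <= r)%R ->
  exists K, (0 <= K)%R /\ forall x k, (Cmod x <= r)%R -> (Cmod (Fterm q x k) <= K / 2 ^ k)%R.
Proof.
  intros Hq Hr. destruct (a_bound q r Hq Hr) as [M [HM HaM]].
  destruct (cc_dom q r Hq Hr) as [Kc [HKc Hc]].
  exists (2 * M * M * Kc)%R. split. { repeat apply Rmult_le_pos; lra. }
  intros x k Hx. unfold Fterm. rewrite !Cmod_mult, Cmod_R, Cmod_pow, Cmod_sq.
  pose proof (WW_le q k Hq) as [HW1 HW2]. rewrite Rabs_pos_eq by lra.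
  specialize (HaM k x Hx). specialize (Hc k).
  assert (Hxk : (Cmod x ^ k <= r ^ k)%R) by (apply pow_incr; split; auto; apply Cmod_ge_0).
  assert (0 <= Cmod x ^ k)%R by (apply pow_le; apply Cmod_ge_0).
  pose proof (Cmod_ge_0 (aS q k x)).
  assert (0 <= cc q k)%R by (left; apply cc_pos; lra).
  apply Rle_trans with (2 * cc q k * r ^ k * (M * M))%R.
  { apply Rmult_le_compat; try nra; apply Rmult_le_compat; try nra. }
  unfold Rdiv. apply Rle_trans with (2 * (M * M) * (cc q k * r ^ k))%R; [right; ring|].
  unfold Rdiv in Hc. 
  apply Rle_trans with (2 * (M * M) * (Kc * / 2 ^ k))%R.
  apply Rmult_le_compat_l; [nra|auto]. right; ring.
Qed.

Lemma F_series q x : (0 < q < 1)%R -> is_series (Fterm q x) (FF q x).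
Proof.
  intros Hq. destruct (Fterm_dom q (Cmod x) Hq (Cmod_ge_0 x)) as [K [HK H]].
  destruct (geom_series (Fterm q x) K) as [l [Hl _]].
  { intros m. apply H. lra. }
  unfold FF. rewrite (CSeries_unique _ l Hl). exact Hl.
Qed.

Lemma inv2pow_small (e : R) : (0 < e)%R -> exists N, forall n, (N <= n)%nat -> (/ 2 ^ n < e)%R.
Proof.
  intros He. destruct (pow_lt_1_zero (/ 2) ltac:(rewrite Rabs_pos_eq; lra) e He) as [N HN].
  exists N. intros n Hn. specialize (HN n Hn). rewrite <- pow_inv.
  rewrite Rabs_pos_eq in HN; auto. apply pow_le. lra.
Qed.

Lemma lim_combine (f g : nat -> C) (L l' : C) (alpha C0 : R) :
  filterlim g eventually (locally l') -> (0 <= alpha)%R ->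
  (forall n, (Cmod (f n - L) <= alpha * Cmod (g n - l') + C0 / 2 ^ n)%R) ->
  filterlim f eventually (locally L).
Proof.
  intros Hg Ha Hf. apply CLim. intros eps Heps.
  destruct (proj1 (CLim g l') Hg (eps / 3 / (alpha + 1))%R) as [N1 HN1].
  { apply Rdiv_lt_0_compat; lra. }
  destruct (inv2pow_small (eps / 3 / (Rabs C0 + 1))%R) as [N2 HN2].
  { apply Rdiv_lt_0_compat. lra. pose proof (Rabs_pos C0). lra. }
  exists (N1 + N2)%nat. intros n Hn.
  specialize (HN1 n ltac:(lia)). specialize (HN2 n ltac:(lia)). specialize (Hf n).
  assert (H1 : (alpha * Cmod (g n - l') <= eps / 3)%R).
  { apply Rle_trans with ((alpha + 1) * Cmod (g n - l'))%R.
    pose proof (Cmod_ge_0 (g n - l')). nra.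
    apply Rle_trans with ((alpha + 1) * (eps / 3 / (alpha + 1)))%R.
    apply Rmult_le_compat_l; lra. right; field; lra. }
  assert (H2 : (C0 / 2 ^ n <= eps / 3)%R).
  { unfold Rdiv at 1. apply Rle_trans with (Rabs C0 * / 2 ^ n)%R.
    apply Rmult_le_compat_r. left; apply Rinv_0_lt_compat, pow_lt; lra. apply Rle_abs.
    pose proof (Rabs_pos C0).
    apply Rle_trans with ((Rabs C0 + 1) * / 2 ^ n)%R.
    assert (0 < / 2 ^ n)%R by (apply Rinv_0_lt_compat, pow_lt; lra). nra.
    apply Rle_trans with ((Rabs C0 + 1) * (eps / 3 / (Rabs C0 + 1)))%R.
    apply Rmult_le_compat_l; lra. right; field; lra. }
  lra.
Qed.

Lemma Cmod_minus_le (a b : C) : (Cmod (a - b) <= Cmod a + Cmod b)%R.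
Proof. unfold Cminus. eapply Rle_trans. apply Cmod_triangle. rewrite Cmod_opp. lra. Qed.

Lemma rem_bound (u b0 b1 c1 c2 c3 : C) (r M e : R) :
  (Cmod u <= r)%R -> (0 <= M)%R -> (Cmod b0 <= M)%R -> (Cmod b1 <= M)%R ->
  (Cmod c1 <= e)%R -> (Cmod c2 <= e)%R -> (Cmod c3 <= e)%R ->
  (Cmod (u * (c1 * b1 ^ 2 - c2 * b0 ^ 2) - 2 * c3 * (b0 * b1)) <= r * (e * (M * M) + e * (M * M)) + 2 * (e * (M * M)))%R.
Proof.
  intros Hu HM H0 H1 Hc1 Hc2 Hc3.
  assert (Hb0 : (Cmod (b0 ^ 2) <= M * M)%R).
  { rewrite Cmod_sq. apply Rmult_le_compat; auto; apply Cmod_ge_0. }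
  assert (Hb1 : (Cmod (b1 ^ 2) <= M * M)%R).
  { rewrite Cmod_sq. apply Rmult_le_compat; auto; apply Cmod_ge_0. }
  assert (Hb01 : (Cmod (b0 * b1) <= M * M)%R).
  { rewrite Cmod_mult. apply Rmult_le_compat; auto; apply Cmod_ge_0. }
  assert (T1 : (Cmod (c1 * b1 ^ 2) <= e * (M * M))%R).
  { rewrite Cmod_mult. apply Rmult_le_compat; auto; apply Cmod_ge_0. }
  assert (T2 : (Cmod (c2 * b0 ^ 2) <= e * (M * M))%R).
  { rewrite Cmod_mult. apply Rmult_le_compat; auto; apply Cmod_ge_0. }
  assert (T3 : (Cmod (2 * c3 * (b0 * b1)) <= 2 * (e * (M * M)))%R).
  { rewrite Cmod_mult, (Cmod_mult 2 c3), Cmod_R, Rabs_pos_eq by lra.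
    pose proof (Cmod_ge_0 c3). pose proof (Cmod_ge_0 (b0 * b1)).
    apply Rle_trans with (2 * (Cmod c3 * Cmod (b0 * b1)))%R; [right; ring|].
    apply Rmult_le_compat_l; [lra|]. apply Rmult_le_compat; auto. }
  assert (T4 : (Cmod (c1 * b1 ^ 2 - c2 * b0 ^ 2) <= e * (M * M) + e * (M * M))%R).
  { eapply Rle_trans. apply Cmod_minus_le. lra. }
  assert (T5 : (Cmod (u * (c1 * b1 ^ 2 - c2 * b0 ^ 2)) <= r * (e * (M * M) + e * (M * M)))%R).
  { rewrite Cmod_mult. apply Rmult_le_compat; auto; apply Cmod_ge_0. }
  eapply Rle_trans. apply Cmod_minus_le. lra.
Qed.

Lemma F_funeq q u : (0 < q < 1)%R -> FF q u = (1 + u) * FF q (RtoC q * u).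
Proof.
  intros Hq.
  set (A := fun k => aS q k u). set (B := fun k => aS q k (RtoC q * u)).
  assert (H1 : forall k, A k = B k - RtoC (q ^ S k) * u * B (S k)).
  { intros k. unfold A, B. apply aS_R1; auto. }
  assert (H2 : forall j, A (S j) = RtoC (q ^ S j) * B (S j) + B j).
  { intros j. unfold A, B. apply aS_R2; auto. }
  pose proof (finite_identity q u A B H1 H2) as FI.
  set (r := Cmod u).
  assert (Hr : (0 <= r)%R) by apply Cmod_ge_0.
  assert (Hv : (Cmod (RtoC q * u) <= r)%R).
  { rewrite Cmod_mult, Cmod_R, Rabs_pos_eq by lra. unfold r. pose proof (Cmod_ge_0 u). nra. }
  destruct (a_bound q r Hq Hr) as [M [HM HaM]].
  destruct (cc_dom q r Hq Hr) as [Kc [HKc Hc]].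
  apply (series_eq (Fterm q u)). apply F_series; auto.
  change (is_series (Fterm q u) ((1 + u) * FF q (RtoC q * u))).
  apply (lim_combine _ (sum_n (Fterm q (RtoC q * u))) _ (FF q (RtoC q * u)) (Cmod (1 + u))
           (r * (Kc + Kc) * M * M + 2 * Kc * M * M)%R).
  - apply F_series; auto.
  - apply Cmod_ge_0.
  - intros N.
    assert (E : sum_n (Fterm q u) N - (1 + u) * FF q (RtoC q * u) =
      (1 + u) * (sum_n (Fterm q (RtoC q * u)) N - FF q (RtoC q * u))
      + (u * (RtoC (cc q (S (S N))) * (RtoC q * u) ^ S N * B (S N) ^ 2
          - RtoC (cc q N) * (RtoC q * u) ^ N * B N ^ 2)
        - 2 * RtoC (cc q (S N)) * (RtoC q * u) ^ S N * B N * B (S N))).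
    { unfold Fterm. rewrite FI. unfold A, B. 
      match goal with |- ?a = ?b => change (@eq C a b) end. ring. }
    match goal with |- (Cmod ?X <= _)%R => replace X with (sum_n (Fterm q u) N - (1 + u) * FF q (RtoC q * u)) by reflexivity end.
    rewrite E. eapply Rle_trans. apply Cmod_triangle. rewrite Cmod_mult.
    apply Rplus_le_compat_l.
    set (v := RtoC q * u) in *.
    assert (Hcc : forall k j, (cc q k <= cc q j)%R -> (j <= N)%nat -> (Cmod (RtoC (cc q k) * v ^ j) <= Kc / 2 ^ j)%R).
    { intros k j Hkj _. rewrite Cmod_mult, Cmod_R, Rabs_pos_eq by (left; apply cc_pos; lra).
      eapply Rle_trans. 2: apply Hc. rewrite Cmod_pow. apply Rmult_le_compat; auto.
      left; apply cc_pos; lra. apply pow_le, Cmod_ge_0. apply pow_incr. split; auto. apply Cmod_ge_0. }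
    assert (Hcc2 : forall k j, (cc q k <= cc q j)%R -> (Cmod (RtoC (cc q k) * v ^ j) <= Kc / 2 ^ j)%R).
    { intros k j Hkj. rewrite Cmod_mult, Cmod_R, Rabs_pos_eq by (left; apply cc_pos; lra).
      eapply Rle_trans. 2: apply Hc. rewrite Cmod_pow. apply Rmult_le_compat; auto.
      left; apply cc_pos; lra. apply pow_le, Cmod_ge_0. apply pow_incr. split; auto. apply Cmod_ge_0. }
    clear Hcc.
    assert (Hhalf : (Kc / 2 ^ S N <= Kc / 2 ^ N)%R).
    { unfold Rdiv. apply Rmult_le_compat_l; auto. apply Rinv_le_contravar. apply pow_lt; lra.
      simpl. pose proof (pow_lt 2 N ltac:(lra)). lra. }
    replace (u * (RtoC (cc q (S (S N))) * v ^ S N * B (S N) ^ 2 - RtoC (cc q N) * v ^ N * B N ^ 2) -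
      2 * RtoC (cc q (S N)) * v ^ S N * B N * B (S N)) with
      (u * ((RtoC (cc q (S (S N))) * v ^ S N) * B (S N) ^ 2 - (RtoC (cc q N) * v ^ N) * B N ^ 2) -
      2 * (RtoC (cc q (S N)) * v ^ S N) * (B N * B (S N))) by ring.
    set (e := (Kc / 2 ^ N)%R).
    apply Rle_trans with (r * (e * (M * M) + e * (M * M)) + 2 * (e * (M * M)))%R.
    2: { right. unfold e. field. apply pow_nonzero. lra. }
assert (RB := rem_bound u (B N) (B (S N)) (RtoC (cc q (S (S N))) * v ^ S N)
        (RtoC (cc q N) * v ^ N) (RtoC (cc q (S N)) * v ^ S N) r M e).
    apply RB. 
    + apply Rle_refl. 
    + exact HM.
    + unfold B. apply (HaM N v Hv).
    + unfold B. apply (HaM (S N) v Hv).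
    +  eapply Rle_trans. apply Hcc2. apply cc_S_le; auto. exact Hhalf.
    +  apply Hcc2. apply Rle_refl.
    +  eapply Rle_trans. apply Hcc2. apply Rle_refl. exact Hhalf.
Qed.

Lemma shift_series (a : nat -> C) (l : C) :
  is_series a l -> is_series (fun m => a (S m)) (l - a 0%nat).
Proof.
  intros H. apply (@is_series_incr_1 C_AbsRing C_NormedModule a (l - a 0%nat)).
  change (plus (l - a 0%nat) (a 0%nat)) with (l - a 0%nat + a 0%nat).
  replace (l - a 0%nat + a 0%nat) with l by ring. exact H.
Qed.

Lemma ac_0_0 q : ac q 0 0 = 1%R.
Proof. unfold ac. simpl. field. Qed.

Lemma aS0_near q r : (0 < q < 1)%R -> (0 <= r)%R ->
  exists K, (0 <= K)%R /\ forall x, (Cmod x <= r)%R -> (Cmod (aS q 0 x - 1) <= K * Cmod x)%R.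
Proof.
  intros Hq Hr. destruct (ac_dom q r Hq Hr) as [K [HK H]].
  exists (2 * K)%R. split; [lra|]. intros x Hx.
  pose proof (shift_series _ _ (a_series q 0 x Hq)) as Hs.
  assert (E0 : aterm q 0 x 0 = 1). { unfold aterm. rewrite ac_0_0. simpl. ring. }
  rewrite E0 in Hs.
  destruct (geom_series (fun m => aterm q 0 x (S m)) (Cmod x * K)) as [l [Hl Hb]].
  { intros m. unfold aterm. rewrite Cmod_mult, Cmod_R, Cmod_pow. simpl pow.
    specialize (H 0%nat m 1%nat). rewrite Nat.add_1_r in H.
    pose proof (Cmod_ge_0 x). pose proof (Rabs_pos (ac q 0 (S m))).
    assert (Cmod x ^ m <= r ^ m)%R by (apply pow_incr; lra).
    assert (0 <= Cmod x ^ m)%R by (apply pow_le; lra).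
    apply Rle_trans with (Cmod x * (Rabs (ac q 0 (S m)) * r ^ m))%R.
    { apply Rle_trans with (Cmod x * (Rabs (ac q 0 (S m)) * Cmod x ^ m))%R. right; ring.
      apply Rmult_le_compat_l; auto. apply Rmult_le_compat_l; auto. }
    unfold Rdiv. rewrite Rmult_assoc. apply Rmult_le_compat_l; auto. }
  rewrite (series_eq _ _ _ Hs Hl). lra.
Qed.

Lemma F_near1 q r : (0 < q < 1)%R -> (0 <= r)%R ->
  exists C0, (0 <= C0)%R /\ forall x, (Cmod x <= r)%R -> (Cmod (FF q x - 1) <= C0 * Cmod x)%R.
Proof.
  intros Hq Hr. destruct (aS0_near q r Hq Hr) as [K [HK HaK]].
  destruct (a_bound q r Hq Hr) as [M [HM HaM]].
  destruct (cc_dom q r Hq Hr) as [Kc [HKc Hc]].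
  exists (2 * (2 * M * M * Kc) + K * (M + 1))%R. split.
  { assert (0 <= M * M * Kc)%R by (apply Rmult_le_pos; [apply Rmult_le_pos|]; lra).
    assert (0 <= K * (M + 1))%R by (apply Rmult_le_pos; lra). lra. }
  intros x Hx.
  pose proof (shift_series _ _ (F_series q x Hq)) as Hs.
  assert (E0 : Fterm q x 0 = aS q 0 x ^ 2). { unfold Fterm. simpl. rewrite Cmult_1_r, Cmult_1_l. reflexivity. }
  rewrite E0 in Hs.
  destruct (geom_series (fun k => Fterm q x (S k)) (Cmod x * (2 * M * M * Kc))) as [l [Hl Hb]].
  { intros k. unfold Fterm. rewrite !Cmod_mult, Cmod_R, Cmod_pow, Cmod_sq. simpl pow.
    pose proof (WW_le q (S k) Hq) as [HW1 HW2]. rewrite Rabs_pos_eq by lra.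
    pose proof (cc_S_le q k Hq). specialize (Hc k).
    specialize (HaM (S k) x Hx). pose proof (Cmod_ge_0 x). pose proof (Cmod_ge_0 (aS q (S k) x)).
    assert (Cmod x ^ k <= r ^ k)%R by (apply pow_incr; lra).
    assert (0 <= Cmod x ^ k)%R by (apply pow_le; lra).
    assert (0 <= cc q k)%R by (left; apply cc_pos; lra).
    assert (0 <= cc q (S k))%R by (left; apply cc_pos; lra).
    assert (HA : (Cmod (aS q (S k) x) * Cmod (aS q (S k) x) <= M * M)%R) by (apply Rmult_le_compat; lra).
    assert (HB : (WW q (S k) * (Cmod x * Cmod x ^ k) <= Cmod x * (2 * (cc q k * r ^ k)))%R).
    { apply Rle_trans with (Cmod x * (WW q (S k) * Cmod x ^ k))%R. right; ring.
      apply Rmult_le_compat_l; auto. apply Rle_trans with (2 * cc q k * r ^ k)%R.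
      apply Rmult_le_compat; try lra. right; ring. }
    apply Rle_trans with (Cmod x * (2 * (cc q k * r ^ k)) * (M * M))%R.
    { apply Rmult_le_compat; [ | | exact HB | exact HA].
      apply Rmult_le_pos; [lra| apply Rmult_le_pos; lra]. apply Rmult_le_pos; lra. }
    apply Rle_trans with (Cmod x * (2 * M * M) * (cc q k * r ^ k))%R. right; ring.
    apply Rle_trans with (Cmod x * (2 * M * M) * (Kc / 2 ^ k))%R.
    apply Rmult_le_compat_l; auto. apply Rmult_le_pos; [lra|nra].
    right. unfold Rdiv. ring. }
  rewrite <- (series_eq _ _ _ Hs Hl) in Hb.
  specialize (HaK x Hx). specialize (HaM 0%nat x Hx).
  assert (E1 : FF q x - 1 = (FF q x - aS q 0 x ^ 2) + (aS q 0 x - 1) * (aS q 0 x + 1)) by ring.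
  rewrite E1. eapply Rle_trans. apply Cmod_triangle. rewrite Cmod_mult.
  assert (Cmod (aS q 0 x + 1) <= M + 1)%R.
  { eapply Rle_trans. apply Cmod_triangle. rewrite Cmod_1. lra. }
  pose proof (Cmod_ge_0 (aS q 0 x - 1)). pose proof (Cmod_ge_0 x).
  assert (Cmod (aS q 0 x - 1) * Cmod (aS q 0 x + 1) <= K * Cmod x * (M + 1))%R.
  { apply Rmult_le_compat; auto. apply Cmod_ge_0. }
  apply Rle_trans with (2 * (Cmod x * (2 * M * M * Kc)) + K * Cmod x * (M + 1))%R. lra.
  right. ring.
Qed.

Lemma qpoch_F q u n : (0 < q < 1)%R -> qpoch (- u) q n * FF q (RtoC (q ^ n) * u) = FF q u.
Proof.
  intros Hq. induction n.
  - simpl. rewrite !Cmult_1_l. reflexivity.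
  - simpl qpoch. rewrite <- IHn. rewrite (F_funeq q (RtoC (q ^ n) * u) Hq).
    replace (RtoC q * (RtoC (q ^ n) * u)) with (RtoC (q ^ S n) * u).
    2: { simpl. rewrite RtoC_mult. ring. }
    ring.
Qed.

Lemma qpoch_bound q u n : (0 < q < 1)%R ->
  (Cmod (qpoch (- u) q n) <= exp (Cmod u * (1 - q ^ n) / (1 - q)))%R.
Proof.
  intros Hq. induction n.
  - simpl. rewrite Cmod_1. replace (Cmod u * (1 - 1) / (1 - q))%R with 0%R by (field; intro; lra).
    rewrite exp_0. lra.
  - simpl qpoch. rewrite Cmod_mult.
    assert (H1 : (Cmod (1 - - u * RtoC (q ^ n)) <= 1 + Cmod u * q ^ n)%R).
    { replace (1 - - u * RtoC (q ^ n)) with (1 + u * RtoC (q ^ n)) by ring.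
      eapply Rle_trans. apply Cmod_triangle. rewrite Cmod_1, Cmod_mult, Cmod_R.
      rewrite Rabs_pos_eq by (left; apply pow_q_pos; lra). lra. }
    assert (H2 : (1 + Cmod u * q ^ n <= exp (Cmod u * q ^ n))%R) by apply exp_ineq1_le.
    replace (Cmod u * (1 - q ^ S n) / (1 - q))%R with
      (Cmod u * (1 - q ^ n) / (1 - q) + Cmod u * q ^ n)%R by (simpl; field; intro; lra).
    rewrite exp_plus. apply Rmult_le_compat; auto. apply Cmod_ge_0. apply Cmod_ge_0.
    lra.
Qed.

Lemma qpoch_lim q u : (0 < q < 1)%R ->
  filterlim (fun n => qpoch (- u) q n) eventually (locally (FF q u)).
Proof.
  intros Hq. apply CLim. intros eps Heps.
  set (r := Cmod u).
  destruct (F_near1 q r Hq (Cmod_ge_0 u)) as [C0 [HC0 HF]].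
  set (E := exp (r / (1 - q))).
  assert (HE : (0 < E)%R) by apply exp_pos.
  destruct (pow_lt_1_zero q ltac:(rewrite Rabs_pos_eq; lra) (eps / (E * (C0 + 1) * (r + 1))))
    as [N HN].
  { apply Rdiv_lt_0_compat; auto. pose proof (Cmod_ge_0 u). apply Rmult_lt_0_compat; [|unfold r; lra].
    apply Rmult_lt_0_compat; lra. }
  exists N. intros n Hn. specialize (HN n Hn).
  rewrite Rabs_pos_eq in HN by (left; apply pow_q_pos; lra).
  rewrite <- (qpoch_F q u n Hq).
  replace (qpoch (- u) q n - qpoch (- u) q n * FF q (RtoC (q ^ n) * u))
    with (- (qpoch (- u) q n * (FF q (RtoC (q ^ n) * u) - 1))) by ring.
  rewrite Cmod_opp, Cmod_mult.
  assert (Hx : (Cmod (RtoC (q ^ n) * u) <= r)%R).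
  { rewrite Cmod_mult, Cmod_R, Rabs_pos_eq by (left; apply pow_q_pos; lra).
    pose proof (pow_q_le1 q n Hq). pose proof (Cmod_ge_0 u). unfold r. nra. }
  specialize (HF _ Hx).
  rewrite Cmod_mult, Cmod_R, Rabs_pos_eq in HF by (left; apply pow_q_pos; lra).
  assert (HP : (Cmod (qpoch (- u) q n) <= E)%R).
  { eapply Rle_trans. apply qpoch_bound; auto. apply exp_mono. unfold r.
    pose proof (Cmod_ge_0 u). pose proof (pow_q_pos q n (proj1 Hq)).
    unfold Rdiv. apply Rmult_le_compat_r. left; apply Rinv_0_lt_compat; lra. nra. }
  pose proof (Cmod_ge_0 (qpoch (- u) q n)). pose proof (Cmod_ge_0 (FF q (RtoC (q ^ n) * u) - 1)).
  pose proof (pow_q_pos q n (proj1 Hq)). pose proof (Cmod_ge_0 u).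
  assert (H3 : (C0 * (q ^ n * Cmod u) <= (C0 + 1) * (r + 1) * q ^ n)%R).
  { unfold r. nra. }
  assert (H4 : ((C0 + 1) * (r + 1) * q ^ n < eps / E)%R).
  { assert (0 < (C0 + 1) * (r + 1))%R by (unfold r; nra).
    apply (Rmult_lt_compat_l ((C0 + 1) * (r + 1))) in HN; auto.
    replace ((C0 + 1) * (r + 1) * (eps / (E * (C0 + 1) * (r + 1))))%R with (eps / E)%R in HN
      by (field; repeat split; unfold r; lra). lra. }
  apply Rle_lt_trans with (E * (C0 * (q ^ n * Cmod u)))%R.
  { apply Rmult_le_compat; auto. }
  apply Rle_lt_trans with (E * ((C0 + 1) * (r + 1) * q ^ n))%R.
  { apply Rmult_le_compat_l; lra. }
  replace eps with (E * (eps / E))%R by (field; lra).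
  apply Rmult_lt_compat_l; lra.
Qed.

Lemma main_F q u : (0 < q < 1)%R ->
  is_series (fun k => Fterm q u (S k)) (qpoch_inf (- u) q - aS q 0 u ^ 2).
Proof.
  intros Hq. unfold qpoch_inf. rewrite (lim_unique_C _ _ (qpoch_lim q u Hq)).
  pose proof (shift_series _ _ (F_series q u Hq)) as H.
  assert (E0 : Fterm q u 0 = aS q 0 u ^ 2). { unfold Fterm. simpl. rewrite Cmult_1_r, Cmult_1_l. reflexivity. }
  rewrite E0 in H. exact H.
Qed.

Lemma qpoch_q q m : qpoch (RtoC q) q m = RtoC (qf q m).
Proof.
  induction m; simpl. reflexivity.
  rewrite IHm. rewrite RtoC_mult, RtoC_minus, RtoC_mult. reflexivity.
Qed.

Lemma qpoch_qk q k m : (0 < q < 1)%R ->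
  qpoch (RtoC (q ^ (k + 1))) q m = RtoC (qf q (k + m) / qf q k).
Proof.
  intros Hq. pose proof (qf_pos q k Hq). induction m; simpl.
  - rewrite Nat.add_0_r. f_equal. field. lra.
  - rewrite IHm.
    assert (E : (qf q (k + S m) / qf q k = qf q (k + m) / qf q k * (1 - q ^ (k + 1) * q ^ m))%R).
    { replace (k + S m)%nat with (S (k + m)) by lia. simpl qf.
      replace (q ^ (k + 1) * q ^ m)%R with (q * q ^ (k + m))%R.
      2: { rewrite <- pow_add. replace (k + 1 + m)%nat with (S (k + m)) by lia. reflexivity. }
      field. lra. }
    rewrite E, RtoC_mult, RtoC_minus, RtoC_mult. reflexivity.
Qed.

Lemma qf_lim q : (0 < q < 1)%R -> exists L, (0 < L)%R /\ is_lim_seq (qf q) L.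
Proof.
  intros Hq. destruct (qf_lb q Hq) as [d [Hd Hdm]].
  destruct (ex_finite_lim_seq_decr (qf q) d) as [L HL]; auto.
  { intros n. simpl. pose proof (qf_pos q n Hq). pose proof (pow_q_pos q n (proj1 Hq)).
    assert (0 < q * q ^ n)%R by nra. nra. }
  exists L. split; auto.
  assert (d <= L)%R.
  { apply (is_lim_seq_le (fun _ => d) (qf q) d L); auto. apply is_lim_seq_const. }
  lra.
Qed.

Lemma RtoC_lim (f : nat -> R) (l : R) :
  is_lim_seq f l -> filterlim (fun n => RtoC (f n)) eventually (locally (RtoC l)).
Proof.
  intros H. apply is_lim_seq_Reals in H. apply CLim. intros eps Heps.
  destruct (H eps Heps) as [N HN]. exists N. intros n Hn.
  rewrite <- RtoC_minus, Cmod_R. apply HN. lia.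
Qed.

Lemma qpoch_ratio q k : (0 < q < 1)%R ->
  qpoch_inf (RtoC (q ^ (k + 1))) q / qpoch_inf (RtoC q) q = / RtoC (qf q k).
Proof.
  intros Hq. destruct (qf_lim q Hq) as [L [HL Hlim]].
  pose proof (qf_pos q k Hq) as Hk.
  assert (E1 : qpoch_inf (RtoC q) q = RtoC L).
  { unfold qpoch_inf. apply lim_unique_C.
    apply (filterlim_ext (fun n => RtoC (qf q n))).
    { intros n. rewrite qpoch_q. reflexivity. }
    apply (RtoC_lim _ _ Hlim). }
  assert (E2 : qpoch_inf (RtoC (q ^ (k + 1))) q = RtoC (L / qf q k)).
  { unfold qpoch_inf. apply lim_unique_C.
    apply (filterlim_ext (fun n => RtoC (qf q (k + n) / qf q k))).
    { intros n. rewrite qpoch_qk; auto. }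
    apply RtoC_lim. apply is_lim_seq_Reals. apply is_lim_seq_Reals in Hlim.
    intros eps Heps. destruct (Hlim (eps * qf q k)%R) as [N HN]. nra.
    exists N. intros n Hn. specialize (HN (k + n)%nat ltac:(lia)).
    unfold Rdist in *. replace (qf q (k + n) / qf q k - L / qf q k)%R with ((qf q (k + n) - L) / qf q k)%R
      by (field; lra).
    rewrite Rabs_div by lra. rewrite (Rabs_pos_eq (qf q k)) by lra.
    apply (Rmult_lt_reg_r (qf q k)); auto. unfold Rdiv. rewrite Rmult_assoc, Rinv_l, Rmult_1_r; lra. }
  rewrite E1, E2. rewrite RtoC_div by lra. field.
  split; intro Hc; apply RtoC_inj in Hc; lra.
Qed.

Lemma exp_nat m k : (m * (m - 1) + (k + 1) * m = m * (m + k))%nat.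
Proof. destruct m. simpl. lia. replace (S m - 1)%nat with m by lia. ring. Qed.

Lemma phi01_conv q k x : (0 < q < 1)%R ->
  phi01 (RtoC (q ^ (k + 1))) q (- RtoC (q ^ (k + 1)) * x) = RtoC (qf q k) * aS q k x.
Proof.
  intros Hq. unfold phi01. apply CSeries_unique.
  eapply is_series_ext. 2: apply (is_series_scal (RtoC (qf q k)) _ _ (a_series q k x Hq)).
  intros m. change (scal ?a ?b) with (a * b). unfold aterm.
  rewrite (pow_n_Cpow (- RtoC (q ^ (k + 1)) * x) m). rewrite Cpow_mult_l. rewrite qpoch_q. rewrite (qpoch_qk q k m Hq).
  pose proof (qf_pos q m Hq). pose proof (qf_pos q k Hq). pose proof (qf_pos q (k + m) Hq).
  assert (E : (- RtoC (q ^ (k + 1))) ^ m = RtoC ((-1) ^ m * q ^ ((k + 1) * m))).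
  { rewrite <- RtoC_opp, <- RtoC_pow. f_equal. rewrite pow_mult.
    rewrite <- Rpow_mult_distr. f_equal. ring. }
  rewrite E.
  rewrite <- RtoC_mult, <- RtoC_div.
  2: { apply Rgt_not_eq. apply Rmult_lt_0_compat; auto. apply Rdiv_lt_0_compat; auto. }
  rewrite Cmult_assoc, <- RtoC_mult. rewrite Cmult_assoc, <- RtoC_mult. f_equal. f_equal.
  unfold ac. rewrite <- (exp_nat m k), pow_add. rewrite (Nat.add_comm m k).
  field. lra.
Qed.

Lemma J2_conv q n w : (0 < q < 1)%R -> J2 n q (2 * w) = w ^ n * aS q n (w ^ 2).
Proof.
  intros Hq. unfold J2.
  replace (- RtoC (q ^ (n + 1)) * pow_n (2 * w) 2 / 4) with (- RtoC (q ^ (n + 1)) * w ^ 2).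
  2: { rewrite (pow_n_Cpow (2 * w) 2). field. }
  rewrite phi01_conv by auto. rewrite qpoch_ratio by auto.
  replace (2 * w / 2) with w by field. rewrite (pow_n_Cpow w n).
  pose proof (qf_pos q n Hq). field. intro H1. apply RtoC_inj in H1. lra.
Qed.

Lemma Rpower_32 q n : (0 < q)%R -> Rpower q (INR n + 3 / 2) = (q ^ (n + 1) * Rpower q (1 / 2))%R.
Proof.
  intros Hq. replace (INR n + 3 / 2)%R with (INR (n + 1) + 1 / 2)%R.
  2: { rewrite plus_INR. simpl. field. }
  rewrite Rpower_plus, Rpower_pow; auto.
Qed.

Lemma jfrak_conv q n w : (0 < q < 1)%R ->
  jfrak n q (2 * w) = RtoC (Rpower q (INR (n * (n + 1)) / 4)) * w ^ n
     * aS q n (RtoC (Rpower q (1 / 2)) * w ^ 2).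
Proof.
  intros Hq. unfold jfrak.
  replace (- RtoC (Rpower q (INR n + 3 / 2)) * pow_n (2 * w) 2 / 4)
    with (- RtoC (q ^ (n + 1)) * (RtoC (Rpower q (1 / 2)) * w ^ 2)).
  2: { rewrite (pow_n_Cpow (2 * w) 2), Rpower_32 by lra. rewrite RtoC_mult. field. }
  rewrite phi01_conv by auto. rewrite qpoch_ratio by auto.
  replace (2 * w / 2) with w by field. rewrite (pow_n_Cpow w n).
  pose proof (qf_pos q n Hq). field. intro H1. apply RtoC_inj in H1. lra.
Qed.

Lemma cc_Rpower q k : (0 < q)%R -> cc q k = Rpower q (INR k * (INR k - 1) / 2).
Proof.
  intros Hq. induction k.
  - simpl. replace (0 * (0 - 1) / 2)%R with 0%R by field. rewrite Rpower_O; auto.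
  - simpl cc. rewrite IHk. rewrite <- (Rpower_pow k q Hq). rewrite <- Rpower_plus.
    f_equal. rewrite S_INR. field.
Qed.

Lemma real_id1 q K : (0 < q)%R -> (0 < K)%nat ->
  ((Rpower q (INR K / 2) + Rpower q (- INR K / 2)) *
   (Rpower q (INR (K * (K + 1)) / 4) * Rpower q (INR (K * (K + 1)) / 4)) =
   WW q K * Rpower q (1 / 2) ^ K)%R.
Proof.
  intros Hq HK. destruct K as [|k]; [lia|].
  unfold WW. rewrite !cc_Rpower by auto.
  rewrite <- (Rpower_pow (S k) (Rpower q (1 / 2))) by apply exp_pos.
  rewrite Rpower_mult. rewrite <- Rpower_plus.
  rewrite Rmult_plus_distr_r, Rmult_plus_distr_r, <- !Rpower_plus.
  set (a := INR (S k)). 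
  replace (INR (S k * (S k + 1))) with (a * (a + 1))%R by (unfold a; rewrite mult_INR, plus_INR; simpl; ring).
  replace (INR (S (S k))) with (a + 1)%R by (unfold a; rewrite (S_INR (S k)); ring).
  rewrite Rplus_comm. f_equal; f_equal; field.
Qed.

Lemma real_id2 q K : (0 < q)%R -> (0 < K)%nat ->
  ((Rpower q (INR K / 2) + Rpower q (- INR K / 2)) * Rpower q (INR (K * K) / 2) = WW q K)%R.
Proof.
  intros Hq HK. destruct K as [|k]; [lia|].
  unfold WW. rewrite !cc_Rpower by auto.
  rewrite Rmult_plus_distr_r, <- !Rpower_plus.
  set (a := INR (S k)).
  replace (INR (S k * S k)) with (a * a)%R by (unfold a; rewrite mult_INR; ring).
  replace (INR (S (S k))) with (a + 1)%R by (unfold a; rewrite (S_INR (S k)); ring).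
  rewrite Rplus_comm. f_equal; f_equal; field.
Qed.

Lemma Cpow_sq_comm (w : C) n : (w ^ 2) ^ n = (w ^ n) ^ 2.
Proof. induction n; simpl. ring. simpl in IHn. rewrite IHn. ring. Qed.

Theorem mainTheorem10 (q : R) (w : C) :
  (0 < q < 1)%R ->
  is_series
    (fun k : nat =>
       RtoC (Rpower q (INR (S k) / 2) + Rpower q (- INR (S k) / 2))
       * pow_n (jfrak (S k) q (2 * w)) 2)
    (qpoch_inf (- RtoC (Rpower q (1 / 2)) * pow_n w 2) q
     - pow_n (jfrak 0 q (2 * w)) 2)
  /\
  is_series
    (fun k : nat =>
       RtoC ((Rpower q (INR (S k) / 2) + Rpower q (- INR (S k) / 2))
             * Rpower q (INR (S k * S k) / 2))
       * pow_n (J2 (S k) q (2 * w)) 2)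
    (qpoch_inf (- pow_n w 2) q - pow_n (J2 0 q (2 * w)) 2).
Proof.
  intros Hq. split.
  - set (s := Rpower q (1 / 2)).
    set (u := RtoC s * w ^ 2).
    pose proof (main_F q u Hq) as H.
    replace (- RtoC s * pow_n w 2) with (- u) by (unfold u; rewrite (pow_n_Cpow w 2); ring).
    replace (pow_n (jfrak 0 q (2 * w)) 2) with (aS q 0 u ^ 2).
    2: { rewrite (pow_n_Cpow (jfrak 0 q (2 * w)) 2), jfrak_conv by auto. simpl INR.
         replace (0 / 4)%R with 0%R by field. rewrite Rpower_O by lra. fold s. fold u. simpl. ring. }
    eapply is_series_ext. 2: exact H.
    intros k. unfold Fterm. match goal with |- ?a = ?b => change (@eq C a b) end.
    rewrite (pow_n_Cpow (jfrak (S k) q (2 * w)) 2), jfrak_conv by auto. fold s. fold u.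
    pose proof (real_id1 q (S k) (proj1 Hq) ltac:(lia)) as RI. fold s in RI.
    set (P := Rpower q (INR (S k * (S k + 1)) / 4)) in *.
    set (X := (Rpower q (INR (S k) / 2) + Rpower q (- INR (S k) / 2))%R) in *.
    unfold u. rewrite Cpow_mult_l, Cpow_sq_comm, <- RtoC_pow.
    transitivity (RtoC (WW q (S k) * s ^ S k) * (w ^ S k) ^ 2 * aS q (S k) (RtoC s * w ^ 2) ^ 2).
    { rewrite !RtoC_mult. ring. }
    rewrite <- RI. rewrite !RtoC_mult. ring.
  - pose proof (main_F q (w ^ 2) Hq) as H.
    replace (- pow_n w 2) with (- w ^ 2) by (rewrite (pow_n_Cpow w 2); ring).
    replace (pow_n (J2 0 q (2 * w)) 2) with (aS q 0 (w ^ 2) ^ 2).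
    2: { rewrite (pow_n_Cpow (J2 0 q (2 * w)) 2), J2_conv by auto. simpl. ring. }
    eapply is_series_ext. 2: exact H.
    intros k. unfold Fterm. match goal with |- ?a = ?b => change (@eq C a b) end.
    rewrite (pow_n_Cpow (J2 (S k) q (2 * w)) 2), J2_conv by auto.
    rewrite <- (real_id2 q (S k) (proj1 Hq) ltac:(lia)).
    rewrite Cpow_sq_comm. rewrite !RtoC_mult. ring.
Qed.
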